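(* Let $r$ be a positive integer. For all sufficiently large $n\in F_r$, $P_1(n)^4\nmid n$.
   Context: For a positive integer $r$, $S_r$ is the multiplicative arithmetic function with $S_r(p^{\alpha})=0$ if $p\leq r$ and $S_r(p^{\alpha})=p^{\alpha-1}(p-r)$ if $p>r$, for all primes $p$ and positive integers $\alpha$. $B_r=\{n\in\mathbb{N}: S_r(n)>0\}$ (positive integers whose smallest prime factor exceeds $r$, together with $1$). $F_r$ is the set of $n\in B_r$ such that $S_r(n)<S_r(m)$ for all $m\in B_r$ with $m>n$. $P_1(n)$ denotes the largest prime divisor of $n$. *)

(* Defs.v *)
From mathcomp Require Import all_boot.
Set Implicit Arguments. Unset Strict Implicit. Unset Printing Implicit Defensive.

Definition S (r n : nat) : nat :=
  \prod_(p <- primes n) (if p <= r then 0 else p ^ (logn p n).-1 * (p - r)).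

Definition inB (r n : nat) : bool := (0 < n) && (0 < S r n).

Definition inF (r n : nat) : Prop :=
  inB r n /\ forall m, inB r m -> n < m -> S r n < S r m.

Definition P1 (n : nat) : nat := max_pdiv n.

(* Main.v *)
Require Import Defs.
From mathcomp Require Import all_boot zify.
Set Implicit Arguments. Unset Strict Implicit.

Definition f (r p k : nat) := if p <= r then 0 else p ^ k.-1 * (p - r).

Lemma S_f r n : S r n = \prod_(p <- primes n) f r p (logn p n).
Proof. by []. Qed.

Lemma SA r a l : prime l -> l %| a -> 0 < a -> S r (a * l) = S r a * l.
Proof.
move=> pl la a0; have l0 := prime_gt0 pl.
have eqP' : primes (a * l) = primes a.
  apply/eq_primes => p; rewrite primesM // orbC; case: (boolP (p \in primes l)) => //=.
  by rewrite primes_prime // inE => /eqP ->; rewrite mem_primes pl a0 la.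
have la' : l \in primes a by rewrite mem_primes pl a0 la.
rewrite !S_f eqP' (bigD1_seq l) ?primes_uniq //=.
rewrite [in RHS](bigD1_seq l) ?primes_uniq //=.
rewrite [RHS]mulnAC; congr (_ * _).
- rewrite lognM // (logn_prime l pl) eqxx addn1 /f.
  have : 0 < logn l a by rewrite logn_gt0.
  case: (l <= r) => //; case: (logn l a) => // k _ /=.
  by rewrite expnSr mulnAC.
- apply: eq_bigr => p ne; rewrite lognM // (logn_prime p pl).
  by rewrite (negbTE ne) addn0.
Qed.

Lemma SB r a q : prime q -> ~~ (q %| a) -> 0 < a -> S r (a * q) = S r a * (q - r).
Proof.
move=> pq qa a0; have q0 := prime_gt0 pq.
have qn : q \notin primes a by rewrite mem_primes (negbTE qa) !andbF.
have pe : perm_eq (primes (a * q)) (q :: primes a).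
  apply: uniq_perm; first exact: primes_uniq.
    by rewrite /= qn primes_uniq.
  move=> p; rewrite (primesM p a0 q0) (primes_prime pq) !inE orbC //.
rewrite !S_f (perm_big _ pe) big_cons [RHS]mulnC; congr (_ * _); last first.
- apply: eq_big_seq => p pa; rewrite lognM // (logn_prime p pq).
  have -> : (p == q) = false by apply/eqP => E; rewrite -E pa in qn.
  by rewrite addn0.
- rewrite lognM // (logn_prime q pq) eqxx /f.
  rewrite (logn_coprime (m:=a)) ?add0n /=; last by rewrite prime_coprime.
  case: ifP => [h|_]; last by rewrite expn0 mul1n.
  by apply/esym/eqP; rewrite subn_eq0.
Qed.

Lemma SD r a l k : prime l -> l %| a -> 0 < a -> S r (a * l ^ k) = S r a * l ^ k.
Proof.
move=> pl la a0; elim: k => [|k IH]; first by rewrite !muln1.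
rewrite expnSr mulnA SA //; last by rewrite muln_gt0 a0 expn_gt0 prime_gt0.
  by rewrite IH mulnA.
by rewrite dvdn_mulr.
Qed.

Lemma SC r a b : 0 < a -> 0 < b -> S r (a * b) <= S r a * b.
Proof.
move=> a0; elim: b {-2}b (leqnn b) => [|B IH] b bB b0; first by case: b bB b0.
case: (ltnP 1 b) => b1; last first.
  have -> : b = 1 by apply/eqP; rewrite eqn_leq b1 b0.
  by rewrite !muln1.
have pl := pdiv_prime b1; set l := pdiv b in pl.
have [b' eb] : exists b', b = b' * l by exists (b %/ l); rewrite divnK // pdiv_dvd.
have l1 := prime_gt1 pl.
have b'0 : 0 < b' by move: b0; rewrite eb muln_gt0 => /andP[].
have b'B : b' <= B by move: bB; rewrite eb => H; nia.
rewrite eb mulnA.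
have ab0 : 0 < a * b' by rewrite muln_gt0 a0.
have H1 : S r (a * b' * l) <= S r (a * b') * l.
  case: (boolP (l %| a * b')) => h; first by rewrite SA.
  by rewrite SB // leq_mul2l leq_subr orbT.
apply: (leq_trans H1); rewrite mulnA leq_mul2r (IH b' b'B b'0) orbT //.
Qed.

Lemma prod_f_gt0 r n (s : seq nat) :
  (0 < \prod_(p <- s) f r p (logn p n)) = all (fun p => r < p) s.
Proof.
elim: s => [|x s IH]; first by rewrite big_nil.
rewrite big_cons muln_gt0 IH /= /f; congr (_ && _).
case: (leqP x r) => h /=; first by [].
by rewrite muln_gt0 expn_gt0 subn_gt0 h (leq_ltn_trans (leq0n r) h).
Qed.

Lemma Spos r n : (0 < S r n) = all (fun p => r < p) (primes n).
Proof. by rewrite S_f prod_f_gt0. Qed.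

Lemma arith1 r d L s0 D : 0 < r -> 0 < d -> s0 * ((r + d) * L) <= D ->
  (r + d) ^ 2 * (L + 1) <= D -> d * (L * s0.+1 + 1) <= D.
Proof.
move=> r0 d0 h1 h2.
rewrite -(@leq_pmul2l (r + d)); last by rewrite addn_gt0 r0.
have -> : (r + d) * (d * (L * s0.+1 + 1)) =
          d * (s0 * ((r + d) * L)) + (r + d) * d * (L + 1) by lia.
have h3 : (r + d) * d * (L + 1) <= (r + d) ^ 2 * (L + 1).
  by rewrite leq_mul2r expnS expn1 leq_mul2l leq_addl !orbT.
have h4 : (r + d) * d * (L + 1) <= r * D.
  apply: (leq_trans h3); apply: (leq_trans h2); by rewrite leq_pmull.
rewrite [X in _ <= X]mulnDl addnC; apply: leq_add => //; rewrite leq_mul2l h1 orbT //.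
Qed.

Lemma arith2 q L s0 D : 0 < q * L -> D = s0 * (q * L) + D %% (q * L) ->
  D %% (q * L) < q * L -> D < q * (L * s0.+1 + 1).
Proof.
move=> _ h1 h2; rewrite {1}h1.
have -> : q * (L * s0.+1 + 1) = s0 * (q * L) + q * L + q by lia.
by rewrite -addnA ltn_add2l (leq_trans h2) // leq_addr.
Qed.

Lemma key r n l e q : 0 < r -> inB r n -> prime l -> l ^ e.+1 %| n ->
  prime q -> ~~ (q %| n) -> r < q -> q ^ 2 * (r`! + 1) <= l ^ e ->
  exists m, inB r m /\ n < m /\ S r m <= S r n.
Proof.
move=> r0 /andP[n0 Sn] pl ln pq qn rq Hq.
set D := l ^ e in Hq; set L := r`!.
have l0 := prime_gt0 pl; have q0 := prime_gt0 pq.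
have D0 : 0 < D by rewrite expn_gt0 l0.
have L0 : 0 < L by rewrite fact_gt0.
have Dn : D %| n by apply: dvdn_trans ln; rewrite dvdn_exp2l.
set n1 := n %/ D.
have en : n = n1 * D by rewrite divnK.
have n10 : 0 < n1 by move: n0; rewrite en muln_gt0 => /andP[].
have ln1 : l %| n1.
  by rewrite -(dvdn_pmul2r D0) -en /D -expnS.
have qn1 : ~~ (q %| n1).
  by apply: contra qn => h; rewrite en dvdn_mulr.
have SnE : S r n = S r n1 * D by rewrite en SD.
set s0 := D %/ (q * L).
set t := L * s0.+1 + 1.
have t0 : 0 < t by rewrite /t addn_gt0 orbT.
exists (n1 * q * t); split; last split.
- apply/andP; split; first by rewrite !muln_gt0 n10 q0 t0.
  rewrite Spos; apply/allP => p pm.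
  move: pm; rewrite mem_primes => /and3P[pp _ pd].
  move: pd; rewrite !Euclid_dvdM // -orbA => /or3P[h|h|h].
  + move: Sn; rewrite Spos => /allP; apply; rewrite mem_primes pp n0 /=.
    by rewrite en dvdn_mulr.
  + by rewrite (eqP (_ : p == q)) // -dvdn_prime2.
  + rewrite ltnNge; apply/negP => pr.
    have pL : p %| L by rewrite dvdn_fact // prime_gt0 // pr.
    move: h; rewrite /t dvdn_addr ?dvdn_mulr // dvdn1 => /eqP p1.
    by rewrite p1 in pp.
- rewrite en -mulnA ltn_pmul2l //.
  have qL0 : 0 < q * L by rewrite muln_gt0 q0 L0.
  have := ltn_pmod D qL0; have := divn_eq D (q * L).
  rewrite -/s0 /t => h1 h2; exact: arith2.
- rewrite SnE.
  apply: (leq_trans (SC _ _ _)); rewrite ?muln_gt0 ?n10 ?q0 //.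
  rewrite SB // -mulnA leq_mul2l; apply/orP; right.
  have h1 : s0 * (q * L) <= D by rewrite leq_trunc_div.
  have e1 : q = r + (q - r) by rewrite subnKC // ltnW.
  rewrite /t; apply: (@arith1 r) => //; first by rewrite subn_gt0.
  - by rewrite -e1.
  - by rewrite -e1.
Qed.

Lemma C1 N : 2 ^ N <= 'C(N.*2, N).
Proof.
elim: N => [|N IH] //.
rewrite doubleS binS binS expnS mul2n -addnn; apply: leq_add.
  by apply: (leq_trans IH); rewrite leq_addl.
by apply: (leq_trans IH); apply: leq_bin2l.
Qed.

Lemma C2 N d : 0 < d -> (N.*2) %/ d <= 2 * (N %/ d) + 1.
Proof.
move=> d0; rewrite -ltnS ltn_divLR //.
have h1 := divn_eq N d; have h2 := ltn_pmod N d0.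
set a := N %/ d in h1 *; set b := N %% d in h1 h2 *.
rewrite h1 -mul2n; nia.
Qed.

Lemma C3 M t : \sum_(1 <= k < M.+1) (k <= t : nat) = minn M t.
Proof.
elim: M => [|M IH]; first by rewrite big_geq // min0n.
rewrite big_nat_recr //= IH; case: (leqP M.+1 t) => h /=; lia.
Qed.

Lemma C4 l N : prime l -> 0 < N -> logn l 'C(N.*2, N) <= trunc_log l (N.*2).
Proof.
move=> pl N0; have l1 := prime_gt1 pl; have l0 := prime_gt0 pl.
set t := trunc_log l (N.*2).
have E := bin_fact (leq_addr N N : N <= N + N).
rewrite addnK addnn in E.
have Cp : 0 < 'C(N.*2, N) by rewrite bin_gt0 -addnn leq_addr.
have := congr1 (logn l) E.
rewrite !lognM ?Cp ?muln_gt0 ?fact_gt0 // !logn_fact //.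
set A := \sum_(1 <= k < N.*2.+1) _.
set B := \sum_(1 <= k < N.+1) _.
move=> hA.
have B' : \sum_(1 <= k < N.*2.+1) N %/ l ^ k = B.
  rewrite (big_cat_nat _ (n := N.+1)) //=; last by rewrite ltnS -addnn leq_addr.
  rewrite [X in _ + X]big1_seq ?addn0 // => k /andP[_]; rewrite mem_index_iota => /andP[h _].
  apply: divn_small; apply: (leq_trans (ltn_expl N l1)).
  by apply: leq_pexp2l => //; apply: ltnW.
have hA2 : A <= 2 * B + t.
  rewrite /A -B' big_distrr /= -[t in _ + t](minn_idPr (_ : t <= N.*2)).
    rewrite -C3 -big_split /=; apply: leq_sum => k _.
    case: (leqP k t) => h.
      by apply: C2; rewrite expn_gt0 l0.
    rewrite divn_small ?leq0n //.
    have := trunc_log_ltn (N.*2) l1; rewrite -/t => h1.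
    by apply: (leq_trans h1); apply: leq_pexp2l.
  apply: (leq_trans (n := l ^ t)); first by apply: ltnW; apply: ltn_expl.
  by apply: trunc_logP => //; rewrite -addnn addn_gt0 N0.
lia.
Qed.

Lemma prod_le_pow (s : seq nat) (g : nat -> nat) Y :
  (forall p, p \in s -> g p <= Y) -> \prod_(p <- s) g p <= Y ^ size s.
Proof.
elim: s => [|x s IH] H; first by rewrite big_nil.
rewrite big_cons expnS leq_mul //; first by apply: H; rewrite mem_head.
by apply: IH => p ps; apply: H; rewrite in_cons ps orbT.
Qed.

Lemma C5 n X Y : 0 < n -> 0 < Y ->
  (forall p, p \in primes n -> p < X /\ p ^ logn p n <= Y) -> n <= Y ^ X.
Proof.
move=> n0 Y0 H.
rewrite {1}(prod_prime_decomp n0) prime_decompE big_map /=.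
apply: (leq_trans (prod_le_pow (Y := Y) _)); first by move=> p /H [].
apply: leq_pexp2l => //.
have -> : X = size (iota 0 X) by rewrite size_iota.
apply: uniq_leq_size; first exact: primes_uniq.
by move=> p /H [h _]; rewrite mem_iota.
Qed.

Lemma cheb x K : 0 < x -> 0 < K -> (2 * x * K) ^ 2 < 2 ^ K ->
  exists q, [/\ prime q, x < q & q <= 2 * x * K].
Proof.
move=> x0 K0 HK.
case: (boolP (has (fun q => prime q && (x < q)) (iota 0 (2 * x * K).+1))).
  move=> /hasP [q]; rewrite mem_iota => /andP[_ h] /andP[pq xq].
  by exists q; split => //; rewrite -ltnS.
move=> /hasPn Hn; exfalso.
set N := x * K.
have N0 : 0 < N by rewrite muln_gt0 x0.
have e2 : 2 * x * K = N.*2 by rewrite -mulnA mul2n.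
have Cp : 0 < 'C(N.*2, N) by rewrite bin_gt0 -addnn leq_addr.
have HC : 'C(N.*2, N) <= (N.*2) ^ x.+1.
  apply: C5 => //; first by rewrite -addnn addn_gt0 N0.
  move=> p; rewrite mem_primes => /and3P[pp _ pd].
  have l1 := prime_gt1 pp.
  have v1 : 0 < logn p 'C(N.*2, N) by rewrite logn_gt0 mem_primes pp Cp.
  have hv := C4 pp N0.
  have hpv : p ^ logn p 'C(N.*2, N) <= N.*2.
    apply: (leq_trans (leq_pexp2l (ltnW l1) hv)).
    by apply: trunc_logP => //; rewrite -addnn addn_gt0 N0.
  split => //.
  have pN : p <= N.*2.
    apply: (leq_trans _ hpv); rewrite -{1}(expn1 p); exact: leq_pexp2l (ltnW l1) v1.
  rewrite ltnS leqNgt; apply/negP => xp.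
  have := Hn p; rewrite mem_iota add0n ltnS e2 pN pp xp => /(_ isT) //.
have := leq_trans (C1 N) HC.
apply/negP; rewrite -ltnNge.
have h1 : (N.*2) ^ x.+1 <= ((N.*2) ^ 2) ^ x.
  rewrite -expnM; apply: leq_pexp2l; first by rewrite -addnn addn_gt0 N0.
  lia.
apply: (leq_ltn_trans h1).
rewrite /N mulnC expnM ltn_exp2r //; by rewrite -mul2n (mulnC K) mulnA.
Qed.

Lemma cube k : 10 <= k -> k ^ 3 <= 2 ^ k.
Proof.
elim: k => [|k IH] // h.
case: (ltnP k 10) => hk.
  by have -> : k = 9 by lia.
apply: (leq_trans (n := 2 * k ^ 3)); last by rewrite [2 ^ _]expnS leq_mul2l IH.
have h4 : 4 <= k by lia.
move: h4; set j := k - 4; have -> : k = j + 4 by lia.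
move=> _; rewrite -addSn !expnS expn0 !muln1; nia.
Qed.

Lemma polyexp c k : c + 10 <= k -> c * k ^ 2 < 2 ^ k.
Proof.
move=> h; apply: (leq_trans _ (cube (leq_trans (leq_addl _ _) h))).
have k0 : 0 < k by lia.
have kk : 0 < k ^ 2 by rewrite expn_gt0 k0.
rewrite (expnS k 2) ltn_pmul2r //; lia.
Qed.

Theorem corollary3p2 (r : nat) (hr : 0 < r) :
  exists N : nat, forall n : nat, N <= n -> inF r n -> ~~ (P1 n ^ 4 %| n).
Proof.
set L := r`!.
set k0 := 64 * (L + 1) + 266.
set P0 := 2 ^ k0.
have [q pq Pq] := prime_above (P0 + r).
set Cq := q ^ 2 * (L + 1).
exists ((Cq * P0) ^ P0).+1 => n Nn [Bn Fn].
apply/negP => H4.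
suff [m [Bm [nm Sm]]] : exists m, inB r m /\ n < m /\ S r m <= S r n.
  by have := Fn m Bm nm; rewrite ltnNge Sm.
have P00 : 0 < P0 by rewrite expn_gt0.
have Cq0 : 0 < Cq by rewrite muln_gt0 expn_gt0 prime_gt0 // addn_gt0 orbT.
have n1 : 1 < n.
  apply: leq_trans Nn; rewrite ltnS expn_gt0 muln_gt0 Cq0 P00 //.
have n0 : 0 < n by apply: ltnW.
set p := P1 n.
have pp : prime p by apply: max_pdiv_prime.
have pn : p \in primes n by rewrite mem_primes pp n0 max_pdiv_dvd.
have rp : r < p by move: Bn => /andP[_]; rewrite Spos => /allP; apply.
have maxp : forall l, l \in primes n -> l <= p.
  by move=> l ln; apply: max_pdiv_max.
case: (ltnP p P0) => hp.
-
  case: (boolP (has (fun l => Cq <= l ^ (logn l n).-1) (primes n))); last first.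
    move=> /hasPn Hn; exfalso.
    have : n <= (Cq * P0) ^ P0.
      apply: C5 => //; first by rewrite muln_gt0 Cq0.
      move=> l ln; split; first exact: leq_ltn_trans (maxp l ln) hp.
      have := Hn l ln; rewrite -ltnNge => h.
      have v0 : 0 < logn l n by rewrite logn_gt0.
      rewrite -(prednK v0) expnS mulnC leq_mul //; first exact: ltnW.
      exact: ltnW (leq_ltn_trans (maxp l ln) hp).
    by rewrite leqNgt Nn.
  move=> /hasP [l ln hl].
  have pl : prime l by move: ln; rewrite mem_primes => /andP[].
  have v0 : 0 < logn l n by rewrite logn_gt0.
  apply: (@key r n l (logn l n).-1 q) => //.
  + by rewrite prednK // pfactor_dvdnn.
  + apply/negP => qn.
    have : q \in primes n by rewrite mem_primes Pq n0 qn.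
    move/maxp => h; move: (leq_trans h (ltnW hp)) pq; lia.
  + lia.
-
  set k := trunc_log 2 p.
  have p0 : 0 < p by apply: prime_gt0.
  have hk : k0 <= k by apply: trunc_log_max.
  have h2k : 2 ^ k <= p by apply: trunc_logP.
  have hp2 : p < 2 ^ k.+1 by apply: trunc_log_ltn.
  have hk1 : 256 + 10 <= k by move: hk; rewrite /k0; lia.
  have hk2 : 64 * (L + 1) + 10 <= k by move: hk; rewrite /k0; lia.
  have e1 := polyexp hk1.
  have e2 := polyexp hk2.
  have K0 : 0 < 4 * k by lia.
  have HK : (2 * p * (4 * k)) ^ 2 < 2 ^ (4 * k).
    have -> : 2 ^ (4 * k) = (2 ^ k) ^ 4 by rewrite -expnM mulnC.
    set z := 2 ^ k in e1 h2k hp2 *.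
    have hp3 : p < 2 * z by rewrite /z -expnS.
    have z0 : 0 < z by rewrite expn_gt0.
    have pp2 : p * p < (2 * z) * (2 * z) by apply: ltn_mul.
    have -> : (2 * p * (4 * k)) ^ 2 = 64 * (k * k) * (p * p) by rewrite expnS expn1; lia.
    have kk : 0 < 64 * (k * k) by rewrite !muln_gt0; lia.
    apply: (leq_trans (n := 64 * (k * k) * ((2 * z) * (2 * z)))).
      by rewrite ltn_pmul2l.
    have -> : 64 * (k * k) * (2 * z * (2 * z)) = (256 * k ^ 2) * (z * z) by rewrite expnS expn1; lia.
    have -> : z ^ 4 = z * (z * z) * z by rewrite !expnS expn0; lia.
    apply: (leq_trans (n := z * (z * z))); first by rewrite leq_mul2r (ltnW e1) orbT.
    by rewrite leq_pmulr.
  have [q' [pq' hq1 hq2]] := cheb p0 K0 HK.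
  apply: (@key r n p 3 q') => //.
  + apply/negP => qn.
    have : q' \in primes n by rewrite mem_primes pq' n0 qn.
    move/maxp => h; lia.
  + lia.
  + set z := 2 ^ k in e2 h2k.
    apply: (leq_trans (n := (2 * p * (4 * k)) ^ 2 * (L + 1))).
      by rewrite leq_mul2r leq_exp2r // hq2 orbT.
    have -> : (2 * p * (4 * k)) ^ 2 * (L + 1) = (64 * (L + 1) * k ^ 2) * (p * p).
      by rewrite !expnS expn0; lia.
    have -> : p ^ 3 = p * (p * p) by rewrite !expnS expn0 muln1.
    rewrite leq_mul2r; apply/orP; right.
    exact: leq_trans (ltnW e2) h2k.
Qed.
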